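(* Suppose the attacker, before receiving Victor's challenge $x$, can pick her own challenge $z$ and obtain a single response $z\boxplus h$. Then the sequence of expected probabilities $\mathrm{Prob}(\mathcal{V}\mid\mathcal{A})$ that the attacker deceives Victor by guessing $x\boxplus h$ is indistinguishable from the sequence $$p_\ell=\sum_{x\in\mathbb{Z}_2^\ell}2^{-\ell}\,G(x,z,z\boxplus h\vdash x\boxplus h)_\ell=\left(\tfrac34\right)^\ell.$$ In particular $\mathrm{Prob}(\mathcal{V}\mid\mathcal{A})$ is negligible.
   Context: Hancke–Kuhn protocol with security parameter $\ell$: shared secret $s$, hash $H$ modeled as a random oracle, counters $a,b$ never reused, token $h=H(s::a::b)=h^{(0)}::h^{(1)}\in\mathbb{Z}_2^{2\ell}$, Victor's uniformly random challenge $x\in\mathbb{Z}_2^\ell$, correct response $x\boxplus h$ with $(x\boxplus h)_i=h^{(x_i)}_i$. $\mathcal{A}$: the event/run in which the responder is an attacker not knowing $s$; $z$ is independent of $x$. $\mathcal{V}$: Victor observes a satisfactory run (sends $x$ and receives the correct response in time). $G(\Xi\vdash\Theta)$ is the guessing chance (maximal probability over randomized guessing procedures of producing $\Theta$ from $\Xi$). Sequences are indistinguishable if they differ by a negligible function $\nu$ (for every polynomial $q$ with non-negative integer coefficients, $\nu(\ell)<1/q(\ell)$ for large $\ell$). *)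

(* Defs.v *)
From HB Require Import structures.
From mathcomp Require Import all_boot all_order all_algebra.
Set Implicit Arguments. Unset Strict Implicit. Unset Printing Implicit Defensive.
Import Order.TTheory GRing.Theory Num.Theory.
Local Open Scope ring_scope.

Definition bits (l : nat) := {ffun 'I_l -> bool}.
(* token h = h^(0) :: h^(1) in Z_2^(2l) *)
Definition token (l : nat) := (bits l * bits l)%type.

Definition bplus (l : nat) (x : bits l) (h : token l) : bits l :=
  [ffun i => if x i then h.2 i else h.1 i].

Definition guesser (l : nat) := {ffun bits l * bits l * bits l -> bits l}.

(* Prob_h [ f (x, z, z [+] h) = x [+] h ],  h uniform on Z_2^(2l)
   (H is a random oracle and the counters are fresh). *)
Definition guess_prob (R : realFieldType) (l : nat) (x z : bits l)
  (f : guesser l) : R :=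
  #|[set h : token l | f (x, z, bplus z h) == bplus x h]|%:R / 2 ^+ (2 * l).

Definition G (R : realFieldType) (l : nat) (x z : bits l) : R :=
  \big[Num.max/0]_(f : guesser l) guess_prob R x z f.

Definition p_seq (R : realFieldType) (z : forall l, bits l) (l : nat) : R :=
  \sum_(x : bits l) 2 ^- l * G R x (z l).

Definition attack_success (R : realFieldType) (l : nat) (z : bits l)
  (g : guesser l) : R :=
  \sum_(x : bits l) 2 ^- l * guess_prob R x z g.

Definition ProbVA (R : realFieldType) (l : nat) : R :=
  \big[Num.max/0]_(z : bits l) \big[Num.max/0]_(g : guesser l)
     attack_success R z g.

Definition peval (R : realFieldType) (q : seq nat) (l : nat) : R :=
  \sum_(i < size q) (nth 0%N q i)%:R * l%:R ^+ i.

Definition negligible (R : realFieldType) (nu : nat -> R) : Prop :=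
  forall q : seq nat, has (fun c => c != 0%N) q ->
    exists N : nat, forall l : nat, (N <= l)%N -> `|nu l| < 1 / peval R q l.

Definition indistinguishable (R : realFieldType) (a b : nat -> R) : Prop :=
  negligible (fun l => a l - b l).

(* Main.v *)
Require Import Defs.
From mathcomp Require Import all_boot all_order all_algebra.
From mathcomp Require Import zify.
Import Order.TTheory GRing.Theory Num.Theory.


Lemma binom_le (l m : nat) : 'C(l, m) * 3 ^ (l - m) <= 4 ^ l.
Proof.
case: (leqP m l) => hml; last by rewrite bin_small.
have -> : 4 ^ l = (3 + 1) ^ l by [].
rewrite expnDn (bigD1 (@Ordinal l.+1 m (hml : m < l.+1))) //=.
rewrite exp1n muln1. exact: leq_addr.
Qed.

Lemma ffact_ge (k l : nat) : (l - k) ^ k.+1 <= l ^_ k.+1.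
Proof.
elim: k l => [|k IH] l; first by rewrite subn0 expn1 ffactnS ffactn0 muln1.
rewrite ffactnS expnS. apply: leq_mul; first exact: leq_subr.
have -> : l - k.+1 = l.-1 - k by lia.
exact: IH.
Qed.

Lemma poly_bound (k : nat) : exists A, forall l, (2 * k <= l)%N -> (k < l)%N ->
  l ^ k.+1 * 3 ^ l <= A * 4 ^ l.
Proof.
exists (2 ^ k.+1 * k.+1`! * 3 ^ k.+1) => l h1 h2.
have e1 : l ^ k.+1 <= 2 ^ k.+1 * (l - k) ^ k.+1.
  rewrite -expnMn leq_exp2r //; lia.
have e2 : (l - k) ^ k.+1 <= 'C(l, k.+1) * k.+1`!.
  rewrite bin_ffact; exact: ffact_ge.
have e3 : 3 ^ l = 3 ^ (l - k.+1) * 3 ^ k.+1 by rewrite -expnD subnK.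
have e4 := binom_le l k.+1.
apply: (leq_trans (leq_mul e1 (leqnn _))).
rewrite e3.
apply: (@leq_trans (2 ^ k.+1 * ('C(l, k.+1) * k.+1`!) * (3 ^ (l - k.+1) * 3 ^ k.+1))).
  apply: leq_mul => //; apply: leq_mul => //.
have -> : 2 ^ k.+1 * ('C(l, k.+1) * k.+1`!) * (3 ^ (l - k.+1) * 3 ^ k.+1)
   = (2 ^ k.+1 * k.+1`! * 3 ^ k.+1) * ('C(l, k.+1) * 3 ^ (l - k.+1)).
  set a := 2 ^ k.+1; set b := k.+1`!; set c := 3 ^ k.+1; set d := 'C(l, k.+1); set e := 3 ^ (l - k.+1).
  clearbody a b c d e; lia.
exact: leq_mul.
Qed.


Lemma exp_beats (C k : nat) : exists N, forall l, (N <= l)%N -> C * l ^ k * 3 ^ l < 4 ^ l.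
Proof.
have [A hA] := poly_bound k.
exists (2 * k + C * A).+1 => l hl.
have hl0 : (0 < l)%N by lia.
rewrite -(ltn_pmul2r hl0).
have := hA l ltac:(lia) ltac:(lia).
rewrite expnSr => h.
have h4 : (0 < 4 ^ l)%N by rewrite expn_gt0.
apply: (@leq_ltn_trans (C * (A * 4 ^ l))).
  have -> : C * l ^ k * 3 ^ l * l = C * (l ^ k * l * 3 ^ l).
    set a := l ^ k; set b := 3 ^ l; clearbody a b; lia.
  by rewrite leq_mul2l h orbT.
have hCA : C * A < l by lia.
by rewrite mulnA (mulnC (4 ^ l) l) ltn_pmul2r.
Qed.

Set Implicit Arguments.

Section Comb.
Variables (l : nat) (x z : bits l).

Definition psi (p : token l) : token l :=
  ([ffun i => if z i then p.2 i else p.1 i], [ffun i => if z i then p.1 i else p.2 i]).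
Definition phi (h : token l) : token l :=
  (bplus z h, bplus [ffun i => ~~ z i] h).

Lemma phi_psi : cancel psi phi.
Proof.
case=> y u; rewrite /phi /psi /bplus; congr pair; apply/ffunP => i; rewrite !ffunE;
  by case: (z i).
Qed.

Lemma psi_inj : injective psi.
Proof. exact: can_inj phi_psi. Qed.

Lemma bplus_z_psi p : bplus z (psi p) = p.1.
Proof. by apply/ffunP => i; rewrite !ffunE; case: (z i). Qed.

Lemma bplus_x_psi p : bplus x (psi p) = [ffun i => if x i == z i then p.1 i else p.2 i].
Proof. by apply/ffunP => i; rewrite !ffunE; case: (z i); case: (x i). Qed.

Lemma card_sum (T : finType) (P : pred T) : #|[set t | P t]| = \sum_t (P t : nat).
Proof.
rewrite -sum1_card big_mkcond /=; apply: eq_bigr => t _; rewrite inE; by case: (P t).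
Qed.

Lemma eq_prod (v w : bits l) : ((v == w) : nat) = \prod_i ((v i == w i) : nat).
Proof.
case: (boolP [forall i, v i == w i]) => H.
  have -> : v == w by apply/eqP/ffunP => i; apply/eqP; move/forallP: H.
  by rewrite big1 // => i _; move/forallP: H => ->.
have [i Hi] := forallPn H.
have -> : (v == w) = false by apply/negbTE; apply: contra Hi => /eqP ->.
by rewrite (bigD1 i) //= (negbTE Hi).
Qed.

Definition c0 (i : 'I_l) : nat := if x i == z i then 2 else 1.

Definition count (f : guesser l) : nat :=
  #|[set h : token l | f (x, z, bplus z h) == bplus x h]|.

Lemma count_eq (f : guesser l) : count f =
  \sum_(y : bits l) \prod_i \sum_(b : bool)
     ((f (x, z, y) i == if x i == z i then y i else b) : nat).
Proof.
rewrite /count card_sum (reindex_inj psi_inj) /=.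
under eq_bigr => p _ do rewrite bplus_z_psi bplus_x_psi eq_prod.
rewrite -(pair_bigA _ (fun (y u : bits l) => \prod_i ((f (x, z, y) i == [ffun i0 => if x i0 == z i0 then y i0 else u i0] i) : nat))) /=.
apply: eq_bigr => y _.
under eq_bigr => u _ do under eq_bigr => i _ do rewrite ffunE.
by rewrite (bigA_distr_bigA (fun i b => (f (x, z, y) i == if x i == z i then y i else b) : nat)).
Qed.


Lemma inner_eq (w y : bool) (a : bool) :
  \sum_(b : bool) ((w == if a then y else b) : nat) = if a then 2 * (w == y) else 1.
Proof. rewrite big_bool /=; case: a; case: w; case: y => //. Qed.

Lemma card_bits : #|{: bits l}| = 2 ^ l.
Proof. by rewrite card_ffun card_bool card_ord. Qed.

Lemma count_le (f : guesser l) : count f <= 2 ^ l * \prod_i c0 i.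
Proof.
rewrite count_eq -card_bits -sum_nat_const.
apply: leq_sum => y _; apply: leq_prod => i _.
rewrite inner_eq /c0; case: (x i == z i) => //.
by case: (_ == _).
Qed.

Definition f0 : guesser l := [ffun t => t.2].

Lemma count_f0 : count f0 = 2 ^ l * \prod_i c0 i.
Proof.
rewrite count_eq -card_bits -sum_nat_const.
apply: eq_bigr => y _; apply: eq_bigr => i _.
by rewrite inner_eq /c0 ffunE eqxx.
Qed.

End Comb.

Lemma sum_c0 (l : nat) (z : bits l) : \sum_(x : bits l) \prod_i c0 x z i = 3 ^ l.
Proof.
have := (bigA_distr_bigA (fun (i : 'I_l) (b : bool) => if b == z i then 2 else 1)).
rewrite /c0 => <-.
rewrite (eq_bigr (fun _ => 3)) ?prod_nat_const ?card_ord // => i _.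
by rewrite big_bool /=; case: (z i).
Qed.


Local Open Scope ring_scope.

Lemma bigmax_eq (R : realFieldType) (T : finType) (F : T -> R) (c : R) (t0 : T) :
  0 <= c -> (forall t, F t <= c) -> F t0 = c -> \big[Num.max/0]_t F t = c.
Proof.
move=> c0 hle heq; apply/le_anti/andP; split.
  by apply: (big_ind (fun v => v <= c)) => // a b ha hb; rewrite ge_max ha hb.
rewrite -heq.
have : t0 \in index_enum T by rewrite mem_index_enum.
elim: (index_enum T) => // a s IH; rewrite inE big_cons => /orP [/eqP <-|hs].
  by rewrite le_max lexx.
by rewrite le_max IH ?orbT.
Qed.

Section Real.
Variables (R : realFieldType) (l : nat).

Definition K (x z : bits l) : R := (2 ^ l * \prod_i c0 x z i)%:R / 2 ^+ (2 * l).

Lemma gp_le x z f : guess_prob R x z f <= K x z.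
Proof.
rewrite /guess_prob /K ler_wpM2r ?invr_ge0 ?exprn_ge0 // ler_nat.
exact: count_le.
Qed.

Lemma gp_f0 x z : guess_prob R x z (f0 l) = K x z.
Proof. by rewrite /guess_prob /K -count_f0. Qed.

Lemma K_ge0 x z : 0 <= K x z.
Proof. by rewrite /K divr_ge0 ?exprn_ge0. Qed.

Lemma G_eq x z : G R x z = K x z.
Proof.
rewrite /G; apply: (@bigmax_eq R _ (fun f => guess_prob R x z f) _ (f0 l)); [exact: K_ge0 | exact: gp_le | exact: gp_f0].
Qed.

Lemma sumK z : \sum_(x : bits l) 2 ^- l * K x z = (3 / 4) ^+ l.
Proof.
rewrite /K.
under eq_bigr => x _ do rewrite natrM mulrA mulrA (mulrC (2 ^- l)) natrX mulfV ?expf_neq0 ?pnatr_eq0 // mul1r.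
rewrite -mulr_suml -natr_sum sum_c0 natrX expr_div_n exprM.
congr (_ / _); by rewrite expr2 -natrM.
Qed.

End Real.

Lemma p_seq_eq (R : realFieldType) (z : forall l, bits l) l : p_seq R z l = (3 / 4) ^+ l.
Proof.
rewrite /p_seq -(sumK R (z l)); apply: eq_bigr => x _; by rewrite G_eq.
Qed.

Lemma attack_le (R : realFieldType) l (z : bits l) g : attack_success R z g <= (3 / 4) ^+ l.
Proof.
rewrite -(sumK R z) /attack_success; apply: ler_sum => x _.
by rewrite ler_wpM2l ?invr_ge0 ?exprn_ge0 // gp_le.
Qed.

Lemma ProbVA_eq (R : realFieldType) l : ProbVA R l = (3 / 4) ^+ l.
Proof.
have h0 : 0 <= (3 / 4 : R) ^+ l by rewrite exprn_ge0 // divr_ge0.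
rewrite /ProbVA; apply: (@bigmax_eq R _ (fun z => \big[Num.max/0]_(g : guesser l) attack_success R z g) _ [ffun _ => false]) => // [z|].
  rewrite (@bigmax_eq R _ (fun g => attack_success R z g) ((3/4) ^+ l) (f0 l)) // ?lexx //.
    exact: attack_le.
  by rewrite /attack_success -(sumK R z); apply: eq_bigr => x _; rewrite gp_f0.
set z0 : bits l := [ffun _ => false].
rewrite (@bigmax_eq R _ (fun g => attack_success R z0 g) ((3/4) ^+ l) (f0 l)) //.
  exact: attack_le.
by rewrite /attack_success -(sumK R z0); apply: eq_bigr => x _; rewrite gp_f0.
Qed.

Definition Qn (q : seq nat) (l : nat) : nat := (\sum_(i < size q) nth 0%N q i * l ^ i)%N.

Lemma peval_Qn (R : realFieldType) q l : peval R q l = (Qn q l)%:R.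
Proof. by rewrite /peval /Qn natr_sum; apply: eq_bigr => i _; rewrite natrM natrX. Qed.

Lemma Qn_gt0 q l : has (fun c => c != 0%N) q -> (0 < l)%N -> (0 < Qn q l)%N.
Proof.
move=> /(has_nthP 0%N) [i hi hn] hl.
rewrite /Qn (bigD1 (Ordinal hi)) //= ltn_addr // muln_gt0 lt0n hn /=.
by rewrite expn_gt0 hl.
Qed.

Lemma Qn_le q l : (0 < l)%N -> (Qn q l <= (\sum_(i < size q) nth 0%N q i) * l ^ size q)%N.
Proof.
move=> hl; rewrite /Qn big_distrl /=; apply: leq_sum => i _.
by rewrite leq_mul2l leq_pexp2l ?orbT // ltnW.
Qed.

Lemma neg_exp (R : realFieldType) : negligible (fun l => (3 / 4 : R) ^+ l).
Proof.
move=> q hq.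
have [N hN] := exp_beats (\sum_(i < size q) nth 0%N q i) (size q).
exists (N + 1)%N => l hl.
have hl0 : (0 < l)%N by lia.
have hQ := @Qn_gt0 q l hq hl0.
rewrite peval_Qn ger0_norm ?exprn_ge0 ?divr_ge0 // expr_div_n.
rewrite ltr_pdivlMr ?ltr0n // mulrAC ltr_pdivrMr ?exprn_gt0 // mul1r.
rewrite -!natrX -natrM ltr_nat.
apply: (leq_ltn_trans _ (hN l ltac:(lia))).
rewrite mulnC leq_mul2r Qn_le ?orbT //.
Qed.

Unset Implicit Arguments.

Theorem proposition6p6 (R : realFieldType) (z : forall l : nat, bits l) :
  indistinguishable (ProbVA R) (p_seq R z) /\
  (forall l : nat, p_seq R z l = (3 / 4) ^+ l) /\
  negligible (ProbVA R).
Proof.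
split; last split.
- move=> q hq.
  exists 1%N => l hl.
  rewrite ProbVA_eq p_seq_eq subrr normr0 peval_Qn div1r invr_gt0 ltr0n.
  exact: Qn_gt0.
- exact: p_seq_eq.
- move=> q hq; have [N hN] := neg_exp R q hq.
  exists N => l hl; rewrite ProbVA_eq; exact: hN.
Qed.
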